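(* Let $A,B,B'$ be clusterings of $\{1,\dots,n\}$ with $1<k_A<n$, and let $B'$ be an $A$-consistent improvement of $B$. Then $\mathrm{NMI}(A,B')>\mathrm{NMI}(A,B)$ and $\mathrm{VI}(A,B')<\mathrm{VI}(A,B)$.
   Context: For a clustering $A=\{A_1,\dots,A_{k_A}\}$ of $\{1,\dots,n\}$, $H(A)=-\sum_i\frac{|A_i|}n\log\frac{|A_i|}n$; the joint entropy $H(A,B)$ is the Shannon entropy of the distribution $(p_{ij})$ with $p_{ij}=|A_i\cap B_j|/n$; the mutual information is $M(A,B)=H(A)+H(B)-H(A,B)$. $\mathrm{NMI}(A,B)=\frac{M(A,B)}{(H(A)+H(B))/2}$ and $\mathrm{VI}(A,B)=2H(A,B)-H(A)-H(B)$. A pair of distinct elements agrees in $A$ and $B$ if it lies in a common cluster in both or in neither; $B'$ is an $A$-consistent improvement of $B$ if $B'\neq B$ and every pair agreeing in $A$ and $B$ also agrees in $A$ and $B'$. *)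

(* Defs.v *)
From mathcomp Require Import all_boot.
From Stdlib Require Import Reals.
Set Implicit Arguments. Unset Strict Implicit. Unset Printing Implicit Defensive.

(* A clustering of {1..n} (encoded as 'I_n = {0..n-1}) is a set of
   nonempty, pairwise disjoint clusters covering everything:
   mathcomp's [partition P [set: 'I_n]]. *)
Definition clustering (n : nat) (P : {set {set 'I_n}}) : bool :=
  partition P [set: 'I_n].

Definition xlnx (x : R) : R := if Rle_dec x 0 then 0%R else (x * ln x)%R.

Definition frac (n : nat) (k : nat) : R := (INR k / INR n)%R.

Definition entropy (n : nat) (A : {set {set 'I_n}}) : R :=
  (- \big[Rplus/0%R]_(C in A) xlnx (frac n #|C|))%R.

Definition joint_entropy (n : nat) (A B : {set {set 'I_n}}) : R :=
  (- \big[Rplus/0%R]_(C in A) \big[Rplus/0%R]_(D in B)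
        xlnx (frac n #|C :&: D|))%R.

Definition mutual_info (n : nat) (A B : {set {set 'I_n}}) : R :=
  (entropy A + entropy B - joint_entropy A B)%R.

Definition NMI (n : nat) (A B : {set {set 'I_n}}) : R :=
  (mutual_info A B / ((entropy A + entropy B) / 2))%R.

Definition VI (n : nat) (A B : {set {set 'I_n}}) : R :=
  (2 * joint_entropy A B - entropy A - entropy B)%R.

Definition same_cluster (n : nat) (P : {set {set 'I_n}}) (x y : 'I_n) : bool :=
  [exists C in P, (x \in C) && (y \in C)].

Definition agrees (n : nat) (A B : {set {set 'I_n}}) (x y : 'I_n) : Prop :=
  x <> y /\ same_cluster A x y = same_cluster B x y.

Definition consistent_improvement (n : nat) (A B B' : {set {set 'I_n}}) : Prop :=
  B' <> B /\ forall x y : 'I_n, agrees A B x y -> agrees A B' x y.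

(* Main.v *)
Require Import Defs.
From HB Require Import structures.
From mathcomp Require Import all_boot zify.
From Stdlib Require Import Reals Lra Lia.

HB.instance Definition _ := Monoid.isComLaw.Build R 0%R Rplus (fun x y z => esym (Rplus_assoc x y z)) Rplus_comm Rplus_0_l.

Local Open Scope R_scope.

Section Sums.
Variable I : finType.

Lemma sumR_le (P : pred I) (f g : I -> R) :
  (forall i, P i -> f i <= g i) ->
  \big[Rplus/0]_(i | P i) f i <= \big[Rplus/0]_(i | P i) g i.
Proof.
move=> H; apply: (big_ind2 (fun a b => a <= b)) => //; first lra.
by move=> a b c d; lra.
Qed.

Lemma sumR_lt (P : pred I) (f g : I -> R) i0 :
  (forall i, P i -> f i <= g i) -> P i0 -> f i0 < g i0 ->
  \big[Rplus/0]_(i | P i) f i < \big[Rplus/0]_(i | P i) g i.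
Proof.
move=> H Pi0 lt0; rewrite (bigD1 i0) //= [X in _ < X](bigD1 i0) //=.
have := @sumR_le (fun i => P i && (i != i0)) f g.
move=> /(_ (fun i => fun h => H i (proj1 (andP h)))) le; lra.
Qed.

Lemma sumR_ge0 (P : pred I) (f : I -> R) :
  (forall i, P i -> 0 <= f i) -> 0 <= \big[Rplus/0]_(i | P i) f i.
Proof.
move=> H; apply: (big_ind (fun a => 0 <= a)) => //; [lra| move=> a b; lra].
Qed.

Lemma sumR_const (A : {pred I}) c :
  \big[Rplus/0]_(i in A) c = INR #|A| * c.
Proof.
rewrite big_const; elim: #|A| => [|k IH]; first by rewrite /=; lra.
rewrite S_INR /=; rewrite IH; lra.
Qed.

Lemma sumR_distr (P : pred I) (f : I -> R) c :
  c * \big[Rplus/0]_(i | P i) f i = \big[Rplus/0]_(i | P i) (c * f i).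
Proof.
apply: (big_rec2 (fun a b => c * a = b)); first lra.
by move=> i a b _ <-; lra.
Qed.

Lemma sumR_add (P : pred I) (f g : I -> R) :
  \big[Rplus/0]_(i | P i) (f i + g i) =
  \big[Rplus/0]_(i | P i) f i + \big[Rplus/0]_(i | P i) g i.
Proof. exact: big_split. Qed.

Lemma sumR_opp (P : pred I) (f : I -> R) :
  \big[Rplus/0]_(i | P i) (- f i) = - \big[Rplus/0]_(i | P i) f i.
Proof.
apply: (big_rec2 (fun a b => a = - b)); first lra.
by move=> i a b _ ->; lra.
Qed.

End Sums.

Local Close Scope R_scope.
Set Implicit Arguments. Unset Strict Implicit.

Section Part.
Variables (n : nat) (P : {set {set 'I_n}}).
Hypothesis hP : clustering P.

Lemma cl_triv : trivIset P.
Proof. by case/and3P: hP. Qed.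
Lemma cl_cover x : x \in cover P.
Proof. by case/and3P: hP => /eqP -> _ _; rewrite inE. Qed.
Lemma mem_cell x : x \in pblock P x.
Proof. by rewrite mem_pblock cl_cover. Qed.
Lemma cell_in x : pblock P x \in P.
Proof. exact: pblock_mem (cl_cover x). Qed.
Lemma cell_eq x y : y \in pblock P x -> pblock P y = pblock P x.
Proof. move=> h; exact: same_pblock cl_triv h. Qed.
Lemma cell_sym x y : (y \in pblock P x) = (x \in pblock P y).
Proof.
apply/idP/idP => h.
  by rewrite (cell_eq h) mem_cell.
by rewrite (cell_eq h) mem_cell.
Qed.
Lemma cell_def C x : C \in P -> x \in C -> pblock P x = C.
Proof. move=> h1 h2; exact: def_pblock cl_triv h1 h2. Qed.
Lemma same_clusterE x y : same_cluster P x y = (y \in pblock P x).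
Proof.
apply/existsP/idP => [[C /andP[CP /andP[xC yC]]]|h].
  by rewrite (cell_def CP xC).
by exists (pblock P x); rewrite cell_in mem_cell h.
Qed.
Lemma card_cell_gt0 x : (0 < #|pblock P x|)%N.
Proof. by apply/card_gt0P; exists x; rewrite mem_cell. Qed.
End Part.

Lemma cl_eq n (P Q : {set {set 'I_n}}) : clustering P -> clustering Q ->
  (forall x, pblock P x = pblock Q x) -> P = Q.
Proof.
move=> hP hQ e.
have sub : forall P Q : {set {set 'I_n}}, clustering P -> clustering Q ->
  (forall x, pblock P x = pblock Q x) -> P \subset Q.
  move=> P1 Q1 h1 h2 e1; apply/subsetP => C CP.
  have : C != set0 by apply: (partition_neq0 h1 CP).
  case/set0Pn => x xC.
  by rewrite -(cell_def h1 CP xC) e1 cell_in.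
by apply/eqP; rewrite eqEsubset !sub.
Qed.

Set Implicit Arguments. Unset Strict Implicit.

Section Struct.
Variables (n : nat) (A B B' : {set {set 'I_n}}).
Hypotheses (hA : clustering A) (hB : clustering B) (hB' : clustering B').
Hypothesis hI : forall x y, agrees A B x y -> agrees A B' x y.

Lemma agr u v : u <> v -> (v \in pblock A u) = (v \in pblock B u) ->
  (v \in pblock A u) = (v \in pblock B' u).
Proof.
move=> ne e.
have [_ ] := hI (conj ne (etrans (same_clusterE hA u v) (etrans e (esym (same_clusterE hB u v))))).
by rewrite (same_clusterE hA) (same_clusterE hB').
Qed.

Lemma K1 u v : v \in pblock B' u -> v \notin pblock A u -> v \in pblock B u.
Proof.
move=> h1 h2; apply/negPn/negP => h3.
have ne : u <> v by move=> e; move: h2; rewrite -e mem_cell.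
have := agr ne; rewrite (negbTE h2) (negbTE h3) h1 => /(_ erefl) //.
Qed.

Lemma K2 u v : v \in pblock B' u -> v \notin pblock B u -> v \in pblock A u.
Proof.
move=> h1 h2; apply/negPn/negP => h3.
by move: h2; rewrite K1.
Qed.

Lemma K3 u v : v \notin pblock A u -> v \notin pblock B u -> v \notin pblock B' u.
Proof.
move=> h1 h2; apply/negP => h3.
by move: h2; rewrite K1.
Qed.

Lemma F1 x y : y \in pblock A x -> y \in pblock B x -> y \in pblock B' x.
Proof.
move=> h1 h2; case: (eqVneq x y) => [<-|ne]; first exact: mem_cell.
have ne' : x <> y by apply/eqP.
by rewrite -(agr ne') // h1 h2.
Qed.

Lemma F2 x : pblock B' x \subset pblock A x \/ pblock B' x \subset pblock B x.
Proof.
case: (boolP (pblock B' x \subset pblock A x)) => [h|]; first by left.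
case/subsetPn => y yB' yA; right.
have yB := K1 yB' yA.
apply/subsetP => z zB'; apply/negPn/negP => zB.
have zA := K2 zB' zB.
have eB' : pblock B' z = pblock B' x by exact: cell_eq.
have eA : pblock A z = pblock A x by exact: cell_eq.
have yAz : y \notin pblock A z by rewrite eA.
have yBz : y \notin pblock B z.
  apply/negP => h; move: zB; rewrite (cell_sym hB) in h.
  by rewrite -(cell_eq hB yB) -(cell_eq hB h) mem_cell.
by move: (K3 yAz yBz); rewrite eB' yB'.
Qed.

End Struct.

Set Implicit Arguments. Unset Strict Implicit.

Section NatIneq.
Variables (n : nat) (A B B' : {set {set 'I_n}}).
Hypotheses (hA : clustering A) (hB : clustering B) (hB' : clustering B').
Hypothesis hI : forall x y, agrees A B x y -> agrees A B' x y.

Variable x : 'I_n.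
Let k := #|pblock A x :&: pblock B x|.
Let k' := #|pblock A x :&: pblock B' x|.
Let m := #|pblock B x|.
Let m' := #|pblock B' x|.

Lemma subAB : pblock A x :&: pblock B x \subset pblock A x :&: pblock B' x.
Proof.
apply/subsetP => y; rewrite !inE => /andP[h1 h2].
by rewrite h1 (F1 hA hB hB' hI h1 h2).
Qed.

Lemma k_pos : (0 < k)%N.
Proof. by apply/card_gt0P; exists x; rewrite inE !mem_cell. Qed.

Lemma ineq_i : (k <= k')%N.
Proof. exact: subset_leq_card subAB. Qed.

Lemma k_le_m : (k <= m)%N.
Proof. by apply: subset_leq_card; apply: subsetIr. Qed.

Lemma ineq_ii : (m' * k <= m * k')%N.
Proof.
have := k_le_m; have := ineq_i.
case: (F2 hA hB hB' hI x) => h.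
  have e : k' = m' by rewrite /k' /m' (setIidPr h).
  rewrite e; nia.
have h2 : (k' <= k)%N.
  apply: subset_leq_card; apply/subsetP => y; rewrite !inE => /andP[-> yB'].
  by rewrite (subsetP h _ yB').
have h3 : (m' <= m)%N by exact: subset_leq_card h.
nia.
Qed.

Lemma ineq_strict : pblock B' x != pblock B x ->
  (m' * k < m * k')%N \/ ((k < k')%N /\ pblock B x \subset pblock A x).
Proof.
move=> ne.
have km0 := k_le_m; have ki := ineq_i; have kp := k_pos.
case: (F2 hA hB hB' hI x) => h.
  have e : k' = m' by rewrite /k' /m' (setIidPr h).
  case: (ltnP k m) => km.
    by left; have := card_cell_gt0 hB' x; rewrite -/m' e; nia.
  have ekm : k = m by apply/eqP; rewrite eqn_leq km k_le_m.
  have eAB : pblock A x :&: pblock B x = pblock B x.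
    by apply/eqP; rewrite eqEcard subsetIr /= -/k ekm leqnn.
  right; split; last by rewrite -eAB subsetIl.
  rewrite ltn_neqAle ineq_i andbT.
  apply/negP => /eqP ekk.
  have : pblock A x :&: pblock B x == pblock A x :&: pblock B' x.
    by rewrite eqEcard subAB /= -/k -/k' ekk leqnn.
  rewrite eAB (setIidPr h) eq_sym => /eqP e2.
  by move: ne; rewrite e2 eqxx.
have h2 : (k' <= k)%N.
  apply: subset_leq_card; apply/subsetP => y; rewrite !inE => /andP[-> yB'].
  by rewrite (subsetP h _ yB').
have h3 : (m' < m)%N.
  apply: proper_card; rewrite properEneq ne h //.
left; nia.
Qed.

End NatIneq.

Set Implicit Arguments. Unset Strict Implicit.
Local Open Scope R_scope.

Definition uu (n : nat) (C : {set 'I_n}) : R := ln (INR #|C|) - ln (INR n).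

Lemma xl (n k : nat) : (0 < n)%nat ->
  INR k * (/ INR n * (ln (INR k) - ln (INR n))) = xlnx (frac n k).
Proof.
move=> n0; have N0 : 0 < INR n by apply: lt_0_INR; apply/ltP.
rewrite /xlnx /frac; case: k => [|k].
  rewrite /= /Rdiv Rmult_0_l; destruct Rle_dec as [h|h]; simpl; ring.
have K0 : 0 < INR k.+1 by apply: lt_0_INR; apply/ltP.
have iN : 0 < / INR n by apply: Rinv_0_lt_compat.
destruct Rle_dec as [h|h]; simpl.
  have : 0 < INR k.+1 / INR n by apply: Rmult_lt_0_compat.
  lra.
rewrite /Rdiv ln_mult // ln_Rinv //; ring.
Qed.

Lemma sum_all (n : nat) (F : 'I_n -> R) :
  \big[Rplus/0]_x F x = \big[Rplus/0]_(x in [set: 'I_n]) F x.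
Proof. by apply: eq_bigl => x; rewrite inE. Qed.

Lemma conv1 n (P : {set {set 'I_n}}) : clustering P -> (0 < n)%nat ->
  \big[Rplus/0]_(C in P) xlnx (frac n #|C|) =
  \big[Rplus/0]_x (/ INR n * uu (pblock P x)).
Proof.
move=> hP n0; rewrite sum_all (set_partition_big _ hP).
apply: eq_bigr => C CP.
rewrite (eq_bigr (fun _ => / INR n * uu C)); last first.
  by move=> x xC; rewrite (cell_def hP CP xC).
by rewrite sumR_const /uu xl.
Qed.

Lemma conv2 n (A B : {set {set 'I_n}}) : clustering A -> clustering B -> (0 < n)%nat ->
  \big[Rplus/0]_(C in A) \big[Rplus/0]_(D in B) xlnx (frac n #|C :&: D|) =
  \big[Rplus/0]_x (/ INR n * uu (pblock A x :&: pblock B x)).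
Proof.
move=> hA hB n0; rewrite sum_all (set_partition_big _ hA).
apply: eq_bigr => C CA.
rewrite (eq_bigr (fun x => / INR n * uu (C :&: pblock B x))); last first.
  by move=> x xC; rewrite (cell_def hA CA xC).
have -> : \big[Rplus/0]_(x in C) (/ INR n * uu (C :&: pblock B x)) =
   \big[Rplus/0]_(x in [set: 'I_n] | x \in C) (/ INR n * uu (C :&: pblock B x)).
  by apply: eq_bigl => x; rewrite inE.
rewrite (set_partition_big_cond _ hB).
apply: eq_bigr => D DB.
rewrite (eq_bigr (fun _ => / INR n * uu (C :&: D))); last first.
  by move=> x /andP[xD _]; rewrite (cell_def hB DB xD).
have -> : \big[Rplus/0]_(x in D | x \in C) (/ INR n * uu (C :&: D)) =
   \big[Rplus/0]_(x in C :&: D) (/ INR n * uu (C :&: D)).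
  by apply: eq_bigl => x; rewrite !inE andbC.
by rewrite sumR_const /uu xl.
Qed.

Local Close Scope R_scope.
Set Implicit Arguments. Unset Strict Implicit.
Local Open Scope R_scope.

Lemma INRpos p : (0 < p)%nat -> 0 < INR p.
Proof. by move=> h; apply: lt_0_INR; apply/ltP. Qed.

Lemma ln_le_nat p q : (0 < p)%nat -> (p <= q)%nat -> ln (INR p) <= ln (INR q).
Proof.
move=> p0 pq; case: (ltngtP p q) pq => // [lt|->] _; last lra.
apply: Rlt_le; apply: ln_increasing; first exact: INRpos.
by apply: lt_INR; apply/ltP.
Qed.

Lemma ln_lt_nat p q : (0 < p)%nat -> (p < q)%nat -> ln (INR p) < ln (INR q).
Proof.
move=> p0 pq; apply: ln_increasing; first exact: INRpos.
by apply: lt_INR; apply/ltP.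
Qed.

Lemma ln_mul_nat p q : (0 < p)%nat -> (0 < q)%nat ->
  ln (INR (p * q)) = ln (INR p) + ln (INR q).
Proof.
move=> p0 q0; rewrite mult_INR ln_mult //; exact: INRpos.
Qed.

Lemma ln_ge (y : R) : 0 < y -> 1 - / y <= ln y.
Proof.
move=> y0; have := exp_ineq1_le (ln (/ y)).
rewrite exp_ln; last by apply: Rinv_0_lt_compat.
rewrite ln_Rinv //; lra.
Qed.

Local Close Scope R_scope.
Set Implicit Arguments. Unset Strict Implicit.
Local Open Scope R_scope.

Section Main.
Variables (n : nat) (A B B' : {set {set 'I_n}}).
Hypotheses (hA : clustering A) (hB : clustering B) (hB' : clustering B').
Hypothesis hI : forall x y, agrees A B x y -> agrees A B' x y.
Hypothesis hk : (1 < #|A|)%nat.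

Lemma exists_out x : exists y, y \notin pblock A x.
Proof.
have : (1 < #|A|)%nat := hk.
case/card_gt1P => C1 [C2 [C1A C2A ne]].
have [C Cin CneA] : exists2 C, C \in A & C != pblock A x.
  case: (eqVneq C1 (pblock A x)) => [e|]; last by exists C1.
  by exists C2 => //; rewrite -e eq_sym.
have : C != set0 by apply: (partition_neq0 hA Cin).
case/set0Pn => y yC; exists y; apply/negP => h.
by move: CneA; rewrite -(cell_def hA Cin yC) (cell_eq hA h) eqxx.
Qed.

Lemma some_pt : exists x : 'I_n, true.
Proof.
have : (1 < #|A|)%nat := hk.
case/card_gt1P => C1 [_ [C1A _ _]].
have : C1 != set0 by apply: (partition_neq0 hA C1A).
by case/set0Pn => y _; exists y.
Qed.

Lemma n_pos : (0 < n)%nat.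
Proof. by have [x _] := some_pt; apply: leq_ltn_trans (ltn_ord x). Qed.


Let N := INR n.
Lemma N_pos : 0 < N.
Proof. exact: INRpos n_pos. Qed.

Lemma lnineq2 (m m' k k' : nat) : (0 < m')%nat -> (0 < k)%nat ->
  (m' * k * k <= m * k' * k')%nat ->
  ln (INR m') + 2 * ln (INR k) <= ln (INR m) + 2 * ln (INR k').
Proof.
move=> m0 k0 h.
have p1 : (0 < m' * k * k)%nat by rewrite !muln_gt0 m0 k0.
have := ln_le_nat p1 h.
have p2 : (0 < m * k' * k')%nat by apply: leq_trans h.
move: p2; rewrite !muln_gt0 => /andP[/andP[q1 q2] q3].
rewrite !ln_mul_nat ?muln_gt0 ?m0 ?k0 ?q1 ?q2 //; lra.
Qed.

Lemma lnineq2s (m m' k k' : nat) : (0 < m')%nat -> (0 < k)%nat ->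
  (m' * k * k < m * k' * k')%nat ->
  ln (INR m') + 2 * ln (INR k) < ln (INR m) + 2 * ln (INR k').
Proof.
move=> m0 k0 h.
have p1 : (0 < m' * k * k)%nat by rewrite !muln_gt0 m0 k0.
have := ln_lt_nat p1 h.
have p2 : (0 < m * k' * k')%nat by apply: leq_trans h; apply: ltnW.
move: p2; rewrite !muln_gt0 => /andP[/andP[q1 q2] q3].
rewrite !ln_mul_nat ?muln_gt0 ?m0 ?k0 ?q1 ?q2 //; lra.
Qed.

Lemma lnineq1 (m m' k k' : nat) : (0 < m')%nat -> (0 < k)%nat ->
  (m' * k <= m * k')%nat ->
  ln (INR m') + ln (INR k) <= ln (INR m) + ln (INR k').
Proof.
move=> m0 k0 h.
have p1 : (0 < m' * k)%nat by rewrite !muln_gt0 m0 k0.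
have := ln_le_nat p1 h.
have p2 : (0 < m * k')%nat by apply: leq_trans h.
move: p2; rewrite !muln_gt0 => /andP[q1 q2].
rewrite !ln_mul_nat ?muln_gt0 ?m0 ?k0 ?q1 ?q2 //; lra.
Qed.

Lemma lnineq1s (m m' k k' : nat) : (0 < m')%nat -> (0 < k)%nat ->
  (m' * k < m * k')%nat ->
  ln (INR m') + ln (INR k) < ln (INR m) + ln (INR k').
Proof.
move=> m0 k0 h.
have p1 : (0 < m' * k)%nat by rewrite !muln_gt0 m0 k0.
have := ln_lt_nat p1 h.
have p2 : (0 < m * k')%nat by apply: leq_trans h; apply: ltnW.
move: p2; rewrite !muln_gt0 => /andP[q1 q2].
rewrite !ln_mul_nat ?muln_gt0 ?m0 ?k0 ?q1 ?q2 //; lra.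
Qed.

Notation kk x := #|pblock A x :&: pblock B x|.
Notation kk' x := #|pblock A x :&: pblock B' x|.

Lemma pw_VI x : -2 * uu (pblock A x :&: pblock B' x) + uu (pblock B' x) <=
                -2 * uu (pblock A x :&: pblock B x) + uu (pblock B x).
Proof.
have h1 := ineq_i hA hB hB' hI x; have h2 := ineq_ii hA hB hB' hI x.
have h : (#|pblock B' x| * kk x * kk x <= #|pblock B x| * kk' x * kk' x)%nat.
  by nia.
have := lnineq2 (card_cell_gt0 hB' x) (k_pos hA hB x) h.
rewrite /uu; lra.
Qed.

Lemma pw_dR x : uu (pblock A x :&: pblock B x) <= uu (pblock A x :&: pblock B' x).
Proof.
rewrite /uu; have := ln_le_nat (k_pos hA hB x) (ineq_i hA hB hB' hI x); lra.
Qed.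

Lemma pw_D x : 0 <= uu (pblock B x) - uu (pblock B' x) +
   uu (pblock A x :&: pblock B' x) - uu (pblock A x :&: pblock B x).
Proof.
have := lnineq1 (card_cell_gt0 hB' x) (k_pos hA hB x) (ineq_ii hA hB hB' hI x).
rewrite /uu; lra.
Qed.


Lemma sum1 (c : R) : \big[Rplus/0]_(x : 'I_n) c = N * c.
Proof. by rewrite sum_all sumR_const cardsT card_ord. Qed.

Definition gg (y z : 'I_n) : R :=
  INR #|pblock A y :&: pblock B z| * / INR #|pblock A y :&: pblock B z|.

Lemma gg_le1 y z : gg y z <= 1.
Proof.
rewrite /gg; case: #|_| => [|p]; first by rewrite /=; lra.
rewrite Rinv_r; first lra.
by apply: Rgt_not_eq; apply: INRpos.
Qed.

Lemma gg_empty y z : pblock A y :&: pblock B z = set0 -> gg y z = 0.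
Proof. by move=> e; rewrite /gg e cards0 /=; lra. Qed.

Lemma S_eq : \big[Rplus/0]_x (INR #|pblock A x| * INR #|pblock B x| * / INR (kk x)) =
  \big[Rplus/0]_y \big[Rplus/0]_z gg y z.
Proof.
have step1 : forall x, INR #|pblock A x| * INR #|pblock B x| * / INR (kk x) =
   \big[Rplus/0]_y \big[Rplus/0]_z
      (if y \in pblock A x then (if z \in pblock B x then / INR (kk x) else 0) else 0).
  move=> x.
  rewrite (eq_bigr (fun y => if y \in pblock A x then INR #|pblock B x| * / INR (kk x) else 0)).
    by rewrite -big_mkcond sumR_const Rmult_assoc.
  move=> y _; case: ifP => _; last by rewrite big1.
  by rewrite -big_mkcond sumR_const.
rewrite (eq_bigr _ (fun x _ => step1 x)) exchange_big /=.
apply: eq_bigr => y _; rewrite exchange_big /=; apply: eq_bigr => z _.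
rewrite (eq_bigr (fun x => if x \in pblock A y :&: pblock B z
     then / INR #|pblock A y :&: pblock B z| else 0)).
  by rewrite -big_mkcond sumR_const.
move=> x _; rewrite inE [y \in pblock A x](cell_sym hA) [z \in pblock B x](cell_sym hB).
case: (boolP (x \in pblock A y)) => xa /=; last by [].
case: (boolP (x \in pblock B z)) => xb /=; last by [].
by rewrite (cell_eq hA xa) (cell_eq hB xb).
Qed.

Lemma S_le : \big[Rplus/0]_x (INR #|pblock A x| * INR #|pblock B x| * / INR (kk x)) <= N * N.
Proof.
rewrite S_eq -[N * N](sum1 N); apply: sumR_le => y _.
rewrite -[N]Rmult_1_r -sum1; apply: sumR_le => z _; exact: gg_le1.
Qed.

Lemma S_lt y0 z0 : pblock A y0 :&: pblock B z0 = set0 ->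
  \big[Rplus/0]_x (INR #|pblock A x| * INR #|pblock B x| * / INR (kk x)) < N * N.
Proof.
move=> e; rewrite S_eq -[N * N](sum1 N).
apply: (@sumR_lt _ _ _ _ y0) => // [y _|].
  rewrite -[N]Rmult_1_r -sum1; apply: sumR_le => z _; exact: gg_le1.
rewrite -[N]Rmult_1_r -sum1; apply: (@sumR_lt _ _ _ _ z0) => // [z _|].
  exact: gg_le1.
rewrite gg_empty //; lra.
Qed.


Lemma pw_ln (a b k M : R) : 0 < a -> 0 < b -> 0 < k -> 0 < M ->
  1 - / M * (a * b * / k) <= ln k - ln M - (ln a - ln M) - (ln b - ln M).
Proof.
move=> a0 b0 k0 M0.
have ab0 : 0 < a * b by apply: Rmult_lt_0_compat.
have y0 : 0 < M * k * / (a * b).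
  apply: Rmult_lt_0_compat; [apply: Rmult_lt_0_compat => // | exact: Rinv_0_lt_compat].
have := ln_ge y0.
rewrite ln_mult //; last exact: Rinv_0_lt_compat.
rewrite ln_mult // ln_Rinv // ln_mult //.
have -> : / (M * k * / (a * b)) = / M * (a * b * / k) by field; lra.
  lra.
by apply: Rmult_lt_0_compat.
Qed.

Definition SS := \big[Rplus/0]_x (INR #|pblock A x| * INR #|pblock B x| * / INR (kk x)).

Lemma I_ge : N - / N * SS <= \big[Rplus/0]_x
  (uu (pblock A x :&: pblock B x) - uu (pblock A x) - uu (pblock B x)).
Proof.
have -> : N - / N * SS = \big[Rplus/0]_x (1 - / N * (INR #|pblock A x| * INR #|pblock B x| * / INR (kk x))).
  rewrite /Rminus sumR_add sumR_opp -sumR_distr sum1 /SS; ring.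
apply: sumR_le => x _; rewrite /uu; apply: pw_ln.
- exact: INRpos (card_cell_gt0 hA x).
- exact: INRpos (card_cell_gt0 hB x).
- exact: INRpos (k_pos hA hB x).
- exact: N_pos.
Qed.

Lemma I_ge0 : 0 <= \big[Rplus/0]_x
  (uu (pblock A x :&: pblock B x) - uu (pblock A x) - uu (pblock B x)).
Proof.
apply: Rle_trans I_ge.
have := S_le; rewrite -/SS => h.
have N0 := N_pos; have iN : 0 < / N by apply: Rinv_0_lt_compat.
have : / N * SS <= / N * (N * N) by apply: Rmult_le_compat_l; lra.
have -> : / N * (N * N) = N by field; lra.
lra.
Qed.

Lemma I_gt0 x0 : pblock B x0 \subset pblock A x0 -> 0 < \big[Rplus/0]_x
  (uu (pblock A x :&: pblock B x) - uu (pblock A x) - uu (pblock B x)).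
Proof.
move=> sub; apply: Rlt_le_trans I_ge.
have [y0 y0o] := exists_out x0.
have e : pblock A y0 :&: pblock B x0 = set0.
  apply/setP => z; rewrite !inE; apply/negP => /andP[z1 z2].
  have z3 := subsetP sub z z2.
  move: y0o; rewrite -(cell_eq hA z3) (cell_eq hA z1) mem_cell //.
have := S_lt e; rewrite -/SS => h.
have N0 := N_pos; have iN : 0 < / N by apply: Rinv_0_lt_compat.
have : / N * SS < / N * (N * N) by apply: Rmult_lt_compat_l; lra.
have -> : / N * (N * N) = N by field; lra.
lra.
Qed.


Lemma sumR_sub (P : pred 'I_n) (f g : 'I_n -> R) :
  \big[Rplus/0]_(i | P i) (f i - g i) =
  \big[Rplus/0]_(i | P i) f i - \big[Rplus/0]_(i | P i) g i.
Proof. by rewrite /Rminus sumR_add sumR_opp. Qed.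

Lemma uu_cell_le0 (P : {set {set 'I_n}}) x : clustering P -> uu (pblock P x) <= 0.
Proof.
move=> hP; rewrite /uu.
have := ln_le_nat (card_cell_gt0 hP x) (max_card (pblock P x)).
rewrite card_ord; lra.
Qed.

Lemma uA_lt0 x : uu (pblock A x) < 0.
Proof.
rewrite /uu.
have [y yo] := exists_out x.
have : (#|pblock A x| < #|[set: 'I_n]|)%nat.
  apply: proper_card; rewrite properT; apply/negP => /eqP e.
  by move: yo; rewrite e inE.
rewrite cardsT card_ord => h.
have := ln_lt_nat (card_cell_gt0 hA x) h; lra.
Qed.

Lemma pw_JA x : uu (pblock A x :&: pblock B x) <= uu (pblock A x).
Proof.
rewrite /uu; have := ln_le_nat (k_pos hA hB x) (subset_leq_card (subsetIl (pblock A x) (pblock B x))).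
lra.
Qed.

Lemma pw_strict x : pblock B' x != pblock B x ->
  (-2 * uu (pblock A x :&: pblock B' x) + uu (pblock B' x) <
                -2 * uu (pblock A x :&: pblock B x) + uu (pblock B x)) /\
  (0 < uu (pblock B x) - uu (pblock B' x) +
   uu (pblock A x :&: pblock B' x) - uu (pblock A x :&: pblock B x) \/
   (uu (pblock A x :&: pblock B x) < uu (pblock A x :&: pblock B' x) /\
    pblock B x \subset pblock A x)).
Proof.
move=> ne.
have h1 := ineq_i hA hB hB' hI x; have h2 := ineq_ii hA hB hB' hI x.
have m0 := card_cell_gt0 hB' x; have k0 := k_pos hA hB x.
have mm0 := card_cell_gt0 hB x.
case: (ineq_strict hA hB hB' hI ne) => [lt|[lt sub]].
  have h : (#|pblock B' x| * kk x * kk x < #|pblock B x| * kk' x * kk' x)%nat by nia.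
  have := lnineq2s m0 k0 h; have := lnineq1s m0 k0 lt.
  rewrite /uu; split; [lra|left; lra].
have h : (#|pblock B' x| * kk x * kk x < #|pblock B x| * kk' x * kk' x)%nat by nia.
have := lnineq2s m0 k0 h; have := ln_lt_nat k0 lt.
rewrite /uu; split; [lra|right; split; [lra|exact: sub]].
Qed.

End Main.

Local Close Scope R_scope.
Unset Implicit Arguments.
Local Open Scope R_scope.

Lemma nmi_alg iN sa sb sj : 0 < iN -> sa + sb < 0 ->
  (- (iN * sa) + - (iN * sb) - - (iN * sj)) / ((- (iN * sa) + - (iN * sb)) / 2)
  = 2 - 2 * ((- sj) / (- (sa + sb))).
Proof. move=> h1 h2; field; split; nra. Qed.

Lemma frac_lt x x' y y' : 0 < y -> 0 < y' -> x' * y < x * y' -> x' / y' < x / y.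
Proof.
move=> y0 y'0 h.
have e : x / y - x' / y' = (x * y' - x' * y) / (y * y') by field; lra.
have : 0 < (x * y' - x' * y) / (y * y').
  apply: Rdiv_lt_0_compat; [lra | exact: Rmult_lt_0_compat].
lra.
Qed.

Section SI.
Variable n : nat.
Lemma sI_le (f g : 'I_n -> R) : (forall x, f x <= g x) ->
  \big[Rplus/0]_x f x <= \big[Rplus/0]_x g x.
Proof. by move=> h; apply: sumR_le => x _; apply: h. Qed.
Lemma sI_lt (f g : 'I_n -> R) x0 : (forall x, f x <= g x) -> f x0 < g x0 ->
  \big[Rplus/0]_x f x < \big[Rplus/0]_x g x.
Proof. by move=> h h0; apply: (@sumR_lt _ _ _ _ x0) => // x _; apply: h. Qed.
Lemma sI_lin (c : R) (f g : 'I_n -> R) :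
  \big[Rplus/0]_x (c * f x + g x) = c * \big[Rplus/0]_x f x + \big[Rplus/0]_x g x.
Proof. by rewrite sumR_add -sumR_distr. Qed.
Lemma sI_sub (f g : 'I_n -> R) :
  \big[Rplus/0]_x (f x - g x) = \big[Rplus/0]_x f x - \big[Rplus/0]_x g x.
Proof. by rewrite /Rminus sumR_add sumR_opp. Qed.
Lemma sI_0 : \big[Rplus/0]_(x : 'I_n) 0 = 0.
Proof. by rewrite big1. Qed.
Lemma sI_4 (a b c d : 'I_n -> R) :
  \big[Rplus/0]_x (a x - b x + c x - d x) =
  \big[Rplus/0]_x a x - \big[Rplus/0]_x b x + \big[Rplus/0]_x c x - \big[Rplus/0]_x d x.
Proof. by rewrite /Rminus !sumR_add !sumR_opp. Qed.
Lemma sI_3 (a b c : 'I_n -> R) :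
  \big[Rplus/0]_x (a x - b x - c x) =
  \big[Rplus/0]_x a x - \big[Rplus/0]_x b x - \big[Rplus/0]_x c x.
Proof. by rewrite /Rminus !sumR_add !sumR_opp. Qed.
End SI.

Local Close Scope R_scope.

Theorem mainTheorem11 (n : nat) (A B B' : {set {set 'I_n}}) :
  clustering A -> clustering B -> clustering B' ->
  (1 < #|A| < n)%N ->
  consistent_improvement A B B' ->
  (NMI A B' > NMI A B)%R /\ (VI A B' < VI A B)%R.
Proof.
move=> hA hB hB' /andP[hk _] [ne hI].
have n0 := n_pos hA hk.
have [x0 hx0] : exists x, pblock B' x != pblock B x.
  case: (boolP [exists x, pblock B' x != pblock B x]) => [/existsP//|/existsPn h].
  have e : B' = B.
    apply: (cl_eq hB' hB) => x; apply/eqP.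
    by move: (h x); rewrite negbK.
  by case: (ne e).
have N0 : (0 < INR n)%R by exact: INRpos.
have iN : (0 < / INR n)%R by apply: Rinv_0_lt_compat.
rewrite /NMI /VI /mutual_info /entropy /joint_entropy !conv1 // !conv2 // -!sumR_distr.
set SA := \big[Rplus/0%R]_x uu (pblock A x).
set SB := \big[Rplus/0%R]_x uu (pblock B x).
set SB' := \big[Rplus/0%R]_x uu (pblock B' x).
set SJ := \big[Rplus/0%R]_x uu (pblock A x :&: pblock B x).
set SJ' := \big[Rplus/0%R]_x uu (pblock A x :&: pblock B' x).
have [st1 st2] := pw_strict hA hB hB' hI hk hx0.
have T : (-2 * SJ' + SB' < -2 * SJ + SB)%R.
  have := @sI_lt n _ _ x0 (fun x => pw_VI hA hB hB' hI hk x) st1.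
  by rewrite !sI_lin.
have SA0 : (SA < 0)%R.
  have := @sI_lt n _ (fun _ => 0%R) x0 (fun x => Rlt_le _ _ (uA_lt0 hA hk x)) (uA_lt0 hA hk x0).
  by rewrite sI_0.
have SB0 : (SB <= 0)%R.
  have := @sI_le n _ (fun _ => 0%R) (fun x => uu_cell_le0 x hB).
  by rewrite sI_0.
have SB'0 : (SB' <= 0)%R.
  have := @sI_le n _ (fun _ => 0%R) (fun x => uu_cell_le0 x hB').
  by rewrite sI_0.
have JA : (SJ <= SA)%R by apply: sI_le => x; exact: pw_JA hA hB x.
have dR : (SJ <= SJ')%R by apply: sI_le => x; exact: pw_dR hA hB hB' hI x.
have D0 : (0 <= SB - SB' + SJ' - SJ)%R.
  have := @sI_le n (fun _ => 0%R) _ (fun x => pw_D hA hB hB' hI x).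
  by rewrite sI_0 sI_4.
have I0 : (0 <= SJ - SA - SB)%R.
  have := I_ge0 hA hB hk; by rewrite sI_3.
have strict : (0 < SB - SB' + SJ' - SJ)%R \/ ((SJ < SJ')%R /\ (0 < SJ - SA - SB)%R).
  case: st2 => [h|[h sub]].
    left; have := @sI_lt n (fun _ => 0%R) _ x0 (fun x => pw_D hA hB hB' hI x) h.
    by rewrite sI_0 sI_4.
  right; split.
    exact: (@sI_lt n _ _ x0 (fun x => pw_dR hA hB hB' hI x) h).
  have := I_gt0 hA hB hk sub; by rewrite sI_3.
split; last first.
  have := Rmult_lt_compat_l _ _ _ iN T; lra.
rewrite !nmi_alg //; try lra.
apply: Rlt_gt; apply: Rplus_lt_compat_l; apply: Ropp_lt_contravar.
apply: Rmult_lt_compat_l; first lra.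
apply: frac_lt; try lra.
have h1 : (0 <= (SJ' - SJ) * (SJ - SA - SB))%R by apply: Rmult_le_pos; lra.
case: strict => [h|[h h']].
  have : (0 < (- SJ) * (SB - SB' + SJ' - SJ))%R by apply: Rmult_lt_0_compat; lra.
  nra.
have : (0 < (SJ' - SJ) * (SJ - SA - SB))%R by apply: Rmult_lt_0_compat; lra.
nra.
Qed.
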